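(* Under the setting and hypotheses (H1)–(H5) in the context, let $\psi_0$ be a locally uniform limit on $[0,T]\times\mathbb{R}$ of a subsequence $\psi_{\varepsilon_n}$ with $\varepsilon_n\to0$. Then $\psi_0$ is a viscosity subsolution of \[ 1=\int_0^\infty\Phi(a)e^{a\,\partial_t\psi(t,x)}\,\mathrm{d}a\int_{\mathbb{R}}\omega(z)e^{z\,\partial_x\psi(t,x)}\,\mathrm{d}z, \] i.e. for every $\Psi\in C^2(\mathbb{R}_+\times\mathbb{R})$ such that $\psi_0-\Psi$ has a local maximum at $(t_0,x_0)$, one has $1\ge\int_0^\infty\int_{\mathbb{R}}\Phi(a)\omega(z)\exp[a\partial_t\Psi(t_0,x_0)+z\partial_x\Psi(t_0,x_0)]\,\mathrm{d}z\,\mathrm{d}a$.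
   Context: Fix $\mu\in(0,1)$, $\sigma>0$, $T>0$. Let $\beta(a)=\mu/(1+a)$ for $a\ge0$, $\Phi(a)=\beta(a)\exp(-\int_0^a\beta(s)\,\mathrm{d}s)=\mu(1+a)^{-1-\mu}$, and $\omega(z)=\frac{1}{\sigma\sqrt{2\pi}}e^{-z^2/(2\sigma^2)}$. For each $\varepsilon>0$ the initial datum is a function $\phi^0_\varepsilon(x,a)$, $x\in\mathbb{R}$, $a\in[0,1)$, of the form $\phi_\varepsilon^0(x,a)=v(x)+\varepsilon\eta(x,a)$, where: (H1) $v$ is bounded; (H2) $a\mapsto\exp(-\inf_x\eta(x,a))$ belongs to $L^1$; (H3) there is $C>0$ such that for all $\varepsilon>0$ and $x\in\mathbb{R}$, $\int_0^1\int_{\mathbb{R}}\Phi(a)\omega(z)e^{\int_0^a\beta}e^{-\eta(x-\varepsilon z,a)}\,\mathrm{d}z\,\mathrm{d}a>e^{-C/\varepsilon}$; (H4) $\phi^0_\varepsilon$ is Lipschitz in $x$ uniformly in $\varepsilon\in(0,1)$; (H5) there is $\mathfrak{C}_{xx}\in\mathbb{R}$ with $\partial_x^2\phi_\varepsilon^0\le\mathfrak{C}_{xx}$ in the sense of distributions. Let $n_\varepsilon(t,x,a)\ge0$ solve $\partial_t n_\varepsilon+\frac1\varepsilon\partial_a n_\varepsilon+\frac1\varepsilon\beta(a)n_\varepsilon=0$ for $t\ge0,a>0,x\in\mathbb{R}$, with $n_\varepsilon(t,x,0)=\int_0^\infty\int_{\mathbb{R}}\beta(a)\omega(z)n_\varepsilon(t,x-\varepsilon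 z,a)\,\mathrm{d}z\,\mathrm{d}a$ and $n_\varepsilon(0,x,a)=\exp(-\phi^0_\varepsilon(x,a)/\varepsilon)$ for $a\in[0,1)$, $n_\varepsilon(0,x,a)=0$ for $a\ge1$. Set $\phi_\varepsilon=-\varepsilon\ln n_\varepsilon$ and $\psi_\varepsilon(t,x)=\phi_\varepsilon(t,x,0)$. Equivalently, $\psi_\varepsilon$ satisfies for $t>0$: $1=\int_0^{t/\varepsilon}\!\int_{\mathbb{R}}\Phi(a)\omega(z)e^{[\psi_\varepsilon(t,x)-\psi_\varepsilon(t-\varepsilon a,x-\varepsilon z)]/\varepsilon}\,\mathrm{d}z\,\mathrm{d}a+\int_0^1\!\int_{\mathbb{R}}\Phi(a+t/\varepsilon)\omega(z)e^{[\psi_\varepsilon(t,x)-\phi^0_\varepsilon(x-\varepsilon z,a)]/\varepsilon+\int_0^a\beta}\,\mathrm{d}z\,\mathrm{d}a$. *)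

(* Defs.v *)
From HB Require Import structures.
From mathcomp Require Import all_boot all_order all_algebra.
From mathcomp Require Import all_classical all_reals all_analysis.
Set Implicit Arguments. Unset Strict Implicit. Unset Printing Implicit Defensive.
Import Order.TTheory GRing.Theory Num.Theory.
Import numFieldNormedType.Exports.
Local Open Scope classical_set_scope.
Local Open Scope ring_scope.

Section Defs.
Variable R : realType.

Definition beta (mu a : R) : R := mu / (1 + a).
(* int_0^a beta(s) ds = mu ln(1+a) (closed form, a >= 0) *)
Definition Bint (mu a : R) : R := mu * ln (1 + a).
(* Phi(a) = beta(a) exp(-int_0^a beta) = mu (1+a)^(-1-mu) *)
Definition Phi (mu a : R) : R := beta mu a * expR (- Bint mu a).
Definition omega (sigma z : R) : R :=
  (sigma * Num.sqrt (2 * pi))^-1 * expR (- (z ^+ 2) / (2 * sigma ^+ 2)).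

Definition phi0 (v : R -> R) (eta : R -> R -> R) (eps x a : R) : R :=
  v x + eps * eta x a.

Definition nonneg_test_fun (chi : R -> R) : Prop :=
  (forall x, 0 <= chi x) /\
  (exists M : R, forall x, M < `|x| -> chi x = 0) /\
  (forall (n : nat) (x : R), derivable (iter n (fun f : R -> R => derive1 f) chi) x 1).

Definition dist_d2_le (f : R -> R) (C : R) : Prop :=
  forall chi, nonneg_test_fun chi ->
    Rintegral lebesgue_measure setT (fun x => f x * (derive1 (derive1 chi)) x)
    <= C * Rintegral lebesgue_measure setT chi.

Definition dt (Psi : R -> R -> R) : R -> R -> R :=
  fun t x => derive1 (fun s => Psi s x) t.
Definition dx (Psi : R -> R -> R) : R -> R -> R :=
  fun t x => derive1 (fun y => Psi t y) x.

Definition C2_at (Psi : R -> R -> R) (t x : R) : Prop :=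
  [/\ derivable (fun s => Psi s x) t 1, derivable (fun y => Psi t y) x 1,
      (forall F, F = dt Psi \/ F = dx Psi ->
         derivable (fun s => F s x) t 1 /\ derivable (fun y => F t y) x 1) &
      (forall F, F \in [:: Psi; dt Psi; dx Psi; dt (dt Psi); dx (dt Psi);
                        dt (dx Psi); dx (dx Psi)] ->
         {for (t, x), continuous (fun p : R * R => F p.1 p.2)})].

Definition C2_pos (Psi : R -> R -> R) : Prop :=
  forall t x, 0 < t -> C2_at Psi t x.

End Defs.

(* Main.v *)
Require Import Defs.
From HB Require Import structures.
From mathcomp Require Import all_boot all_order all_algebra.
From mathcomp Require Import all_classical all_reals all_analysis.
From mathcomp Require Import ring lra measurable_realfun.
Import Order.TTheory GRing.Theory Num.Theory.
Import numFieldNormedType.Exports.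
Local Open Scope classical_set_scope.
Local Open Scope ring_scope.

Lemma mvt_lb (R : realType) (g : R -> R) (u v c e : R) :
  (forall w, Num.min u v <= w <= Num.max u v -> derivable g w 1 /\ `|derive1 g w - c| <= e) ->
  c * (v - u) - e * `|v - u| <= g v - g u.
Proof.
move=> H.
have key : forall a b, a <= b -> (forall w, a <= w <= b -> derivable g w 1 /\ `|derive1 g w - c| <= e) ->
   exists2 w, a <= w <= b & g b - g a = derive1 g w * (b - a) /\ `|derive1 g w - c| <= e.
  move=> a b ab Hab.
  have [w wab eq] : exists2 w, w \in `[a, b]%R & g b - g a = derive1 g w * (b - a).
    apply: MVT_segment => //.
      move=> x; rewrite in_itv /= => /andP[ax xb].
      have := Hab x; rewrite (ltW ax) (ltW xb) => /(_ isT) [dx _].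
      by rewrite derive1E; exact: derivableP.
    apply: derivable_within_continuous => x; rewrite in_itv /= => /andP[ax xb].
    by have := Hab x; rewrite ax xb => /(_ isT) [].
  move: wab; rewrite in_itv /= => /andP[aw wb].
  exists w; first by rewrite aw wb.
  split => //; by have := Hab w; rewrite aw wb => /(_ isT) [].
case: (leP u v) => uv.
- have [w _ [eq le]] : exists2 w, u <= w <= v & g v - g u = derive1 g w * (v - u) /\ `|derive1 g w - c| <= e.
    apply: key uv _ => w /andP[h1 h2]; apply: H.
    by rewrite ge_min le_max h1 h2 orbT.
  rewrite eq; move: le; rewrite ler_norml => /andP[l1 l2].
    rewrite ger0_norm ?subr_ge0 //.
    have : 0 <= v - u by rewrite subr_ge0.
    nra.
- have [w _ [eq le]] : exists2 w, v <= w <= u & g u - g v = derive1 g w * (u - v) /\ `|derive1 g w - c| <= e.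
    apply: key (ltW uv) _ => w /andP[h1 h2]; apply: H.
    by rewrite ge_min le_max h1 h2 orbT.
  have -> : g v - g u = - (g u - g v) by ring.
  rewrite eq; move: le; rewrite ler_norml => /andP[l1 l2].
  rewrite ltr0_norm ?subr_lt0 //.
  have : 0 <= u - v by rewrite subr_ge0 ltW.
  nra.
Qed.

Definition tI (R : realType) (n : nat) : set R := `[(- (n%:R))%R, (n%:R)%R]%classic.
Definition trc (R : realType) (n : nat) (f : R -> \bar R) : R -> \bar R :=
  fun x => if x \in tI R n then f x else 0%E.
Arguments trc {R}.
Lemma memtI (R : realType) (n : nat) (x : R) : (x \in tI R n) = ((- (n%:R)) <= x <= n%:R)%R.
Proof. rewrite /tI. apply/idP/idP. move=> /set_mem /=. rewrite in_itv //=. move=> h; apply/mem_set => /=. by rewrite in_itv. Qed.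
Local Open Scope ereal_scope.
Lemma le_int_any (R : realType) (D D' : set R) (f g : R -> \bar R) :
  (forall x, D x -> 0 <= f x) -> (forall x, D' x -> 0 <= g x) ->
  (forall x, D x -> f x = 0 \/ (D' x /\ f x <= g x)) ->
  \int[@lebesgue_measure R]_(x in D) f x <= \int[@lebesgue_measure R]_(x in D') g x.
Proof.
move=> f0 g0 H; rewrite !ge0_integralE //.
apply: ereal_sup_le => _ [h hf <-]; exists h => //= x.
apply: le_trans (hf x) _; rewrite /patch.
have gp : 0 <= (if x \in D' then g x else 0).
  by case: ifPn => // /set_mem; exact: g0.
case: ifPn => // /set_mem Dx.
case: (H x Dx) => [->//|[D'x le]].
by rewrite (mem_set D'x).
Qed.

Lemma measurable_trc (R : realType) (D : set R) (f : R -> \bar R) (n : nat) :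
  measurable D -> measurable_fun D f -> measurable_fun D (trc n f).
Proof.
move=> mD mf.
have -> : trc n f = f \_ (tI R n) by [].
have mI : measurable (tI R n) by exact: measurable_itv.
apply: (proj1 (@measurable_restrict _ _ R (\bar R) (tI R n) D f mI mD)).
move=> _ Y mY; rewrite setIAC; apply: measurableI; [exact: (mf mD Y mY)|exact: mI].
Qed.

Lemma int_trunc_le (R : realType) (D : set R) (f : R -> \bar R) (M : \bar R) :
  measurable D -> measurable_fun D f -> (forall x, D x -> 0 <= f x) ->
  (forall n : nat, \int[@lebesgue_measure R]_(x in D) trc n f x <= M) ->
  \int[@lebesgue_measure R]_(x in D) f x <= M.
Proof.
move=> mD mf f0 HM.
pose g := fun (n : nat) => trc n f.
have mg n : measurable_fun D (g n).
  have -> : g n = f \_ (tI R n) by [].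
  have mI : measurable (tI R n) by exact: measurable_itv.
  apply: (proj1 (@measurable_restrict _ _ R (\bar R) (tI R n) D f mI mD)).
  move=> _ Y mY; rewrite setIAC; apply: measurableI; [exact: (mf mD Y mY)|exact: mI].
have g0 : forall k x, D x -> 0 <= g k x.
  by move=> k x Dx; rewrite /g /trc; case: ifPn => // _; exact: f0.
have ndg x : D x -> nondecreasing_seq (g^~ x).
  move=> Dx m n mn; rewrite /g /trc.
  case: ifPn => [|_]; last by case: ifPn => // _; exact: f0.
  rewrite memtI => /andP[h1 h2].
  have mn' : (m%:R <= n%:R :> R)%R by rewrite ler_nat.
  have -> : x \in tI R n by rewrite memtI; apply/andP; split; lra.
  by [].
have lim_g x : D x -> limn (g^~ x) = f x.
  move=> Dx; apply: lim_near_cst.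
    exact: ereal_hausdorff.
  exists (Num.truncn `|x|%R).+1 => // n /= hn.
  rewrite /g /trc ifT //.
  have h1 : (`|x| < n%:R)%R.
    apply: lt_le_trans (truncnS_gt _) _; rewrite ler_nat; exact: hn.
  rewrite memtI; move: h1; rewrite ltr_norml => /andP[h1 h2].
  apply/andP; split; lra.
have -> : \int[lebesgue_measure]_(x in D) f x = \int[lebesgue_measure]_(x in D) limn (g^~ x).
  by apply: eq_integral => x /set_mem Dx; rewrite lim_g.
rewrite (@monotone_convergence _ (measurableTypeR R) R lebesgue_measure D mD g mg g0 ndg).
apply: lime_le.
  apply: ereal_nondecreasing_is_cvgn => m n mn.
  apply: (@ge0_le_integral _ (measurableTypeR R) R lebesgue_measure D mD (g m) (g n) (g0 m) (mg m) (mg n)) => x Dx; exact: ndg.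
by apply: nearW => n; exact: HM.
Qed.

Local Close Scope ereal_scope.

Local Open Scope ereal_scope.

Lemma le1_of_exp (R : realType) (x : R) :
  (forall dl : R, (0 < dl)%R -> (x * expR (- dl) <= 1)%R) -> (x <= 1)%R.
Proof.
move=> H; rewrite leNgt; apply/negP => x1.
have x0 : (0 < x)%R by apply: lt_trans x1.
have l0 : (0 < ln x)%R by exact: ln_gt0.
have := H (ln x / 2)%R; rewrite divr_gt0 // => /(_ isT).
rewrite expRN ler_pdivrMr ?expR_gt0 // mul1r => h.
have : (expR (ln x / 2) < expR (ln x))%R by rewrite ltr_expR; lra.
rewrite lnK ?posrE //; lra.
Qed.

Lemma M3 (R : realType) (G H : R -> R) :
  (forall a, 0 <= a -> 0 <= G a)%R -> (forall z, 0 <= H z)%R ->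
  measurable_fun (`[0%R, +oo[ : set R) G -> measurable_fun (setT : set R) H ->
  (forall (A Z : nat) (dl : R), (0 < dl)%R ->
     \int[@lebesgue_measure R]_(a in `[0%R, +oo[) trc A (fun a => (G a)%:E) a *
     (\int[@lebesgue_measure R]_(z in setT) trc Z (fun z => (H z)%:E) z * (expR (- dl))%:E) <= 1) ->
  \int[@lebesgue_measure R]_(a in `[0%R, +oo[)
     \int[@lebesgue_measure R]_(z in setT) ((G a)%:E * (H z)%:E) <= 1.
Proof.
move=> G0 H0 mG mH Hyp.
set D : set R := `[0%R, +oo[%classic.
have mD : measurable D by exact: measurable_itv.
have DP a : D a -> (0 <= a)%R by rewrite /D /= in_itv /= andbT.
have mHe : measurable_fun setT (fun z => (H z)%:E) by exact/measurable_EFinP.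
have mGe : measurable_fun D (fun a => (G a)%:E) by exact/measurable_EFinP.
pose K := \int[@lebesgue_measure R]_(z in setT) (H z)%:E.
have K0 : 0 <= K by apply: integral_ge0 => z _; rewrite lee_fin.
pose JA (A : nat) := \int[@lebesgue_measure R]_(a in D) trc A (fun a => (G a)%:E) a.
pose KZ (Z : nat) := \int[@lebesgue_measure R]_(z in setT) trc Z (fun z => (H z)%:E) z.
have JA0 A : 0 <= JA A.
  apply: integral_ge0 => a /DP a0; rewrite /trc; case: ifP => // _; rewrite lee_fin; exact: G0.
have KZ0 Z : 0 <= KZ Z.
  apply: integral_ge0 => z _; rewrite /trc; case: ifP => // _; rewrite lee_fin; exact: H0.
have step1 A Z : JA A * KZ Z <= 1.
  have X0 : 0 <= JA A * KZ Z by exact: mule_ge0.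
  have hd dl : (0 < dl)%R -> JA A * KZ Z * (expR (- dl))%:E <= 1.
    by move=> dl0; rewrite -muleA; exact: Hyp.
  move: X0 hd; case: (JA A * KZ Z) => [x| |] X0 hd //.
  - rewrite lee_fin; apply: le1_of_exp => dl dl0.
    by have := hd dl dl0; rewrite -EFinM lee_fin.
  - have := hd 1%R ltr01; rewrite mulyr gtr0_sg ?expR_gt0 // mul1e.
    by rewrite leye_eq.
have step2 A : JA A * K <= 1.
  rewrite -(@ge0_integralZl _ (measurableTypeR R) R lebesgue_measure setT measurableT
    (fun z => (H z)%:E) mHe (JA A)) //; last by move=> z _; rewrite lee_fin.
  apply: int_trunc_le => //.
  - exact: measurable_funeM.
  - by move=> z _; apply: mule_ge0 => //; rewrite lee_fin.
  - move=> n.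
    have -> : \int[@lebesgue_measure R]_(z in setT) trc n (fun z => JA A * (H z)%:E) z =
              \int[@lebesgue_measure R]_(z in setT) (JA A * trc n (fun z => (H z)%:E) z).
      by apply: eq_integral => z _; rewrite /trc; case: ifP => _; rewrite ?mule0.
    rewrite (@ge0_integralZl _ (measurableTypeR R) R lebesgue_measure setT measurableT
      (fun z => trc n (fun z => (H z)%:E) z)) //.
    + exact: step1.
    + exact: measurable_trc.
    + by move=> z _; rewrite /trc; case: ifP => // _; rewrite lee_fin.
have -> : \int[@lebesgue_measure R]_(a in D)
     \int[@lebesgue_measure R]_(z in setT) ((G a)%:E * (H z)%:E) =
     \int[@lebesgue_measure R]_(a in D) (K * (G a)%:E).
  apply: eq_integral => a /set_mem /DP a0.
  rewrite (@ge0_integralZl _ (measurableTypeR R) R lebesgue_measure setT measurableT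
      (fun z => (H z)%:E) mHe) //; last by rewrite lee_fin; exact: G0.
    by rewrite muleC.
  by move=> z _; rewrite lee_fin.
apply: int_trunc_le => //.
- exact: measurable_funeM.
- by move=> a /DP a0; apply: mule_ge0 => //; rewrite lee_fin; exact: G0.
- move=> n.
  have -> : \int[@lebesgue_measure R]_(a in D) trc n (fun a => K * (G a)%:E) a =
            \int[@lebesgue_measure R]_(a in D) (K * trc n (fun a => (G a)%:E) a).
    by apply: eq_integral => a _; rewrite /trc; case: ifP => _; rewrite ?mule0.
  rewrite (@ge0_integralZl _ (measurableTypeR R) R lebesgue_measure D mD
      (fun a => trc n (fun a => (G a)%:E) a)) //.
  + by rewrite muleC; exact: step2.
  + exact: measurable_trc.
  + by move=> a /DP a0; rewrite /trc; case: ifP => // _; rewrite lee_fin; exact: G0.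
Qed.

Local Close Scope ereal_scope.

Lemma Phi_ge0 (R : realType) (mu a : R) : 0 <= mu -> 0 <= a -> 0 <= Phi mu a.
Proof.
move=> m0 a0; rewrite /Phi /beta; apply: mulr_ge0; last exact: expR_ge0.
apply: divr_ge0 => //; lra.
Qed.

Lemma omega_ge0 (R : realType) (sigma z : R) : 0 <= sigma -> 0 <= omega sigma z.
Proof.
move=> s0; rewrite /omega; apply: mulr_ge0; last exact: expR_ge0.
rewrite invr_ge0; apply: mulr_ge0 => //; exact: sqrtr_ge0.
Qed.

Lemma mG (R : realType) (mu p : R) :
  measurable_fun (`[0%R, +oo[%classic : set R) (fun a => Phi mu a * expR (a * p)).
Proof.
apply: (@eq_measurable_fun _ _ R R _
  (fun a => mu * expR (- ln (1 + a)) * expR (- (mu * ln (1 + a))) * expR (a * p))).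
  move=> a; rewrite inE /= in_itv /= andbT => a0.
  rewrite /Phi /beta /Bint expRN lnK ?posrE; last lra.
  by [].
have mln : measurable_fun setT (fun a : R => ln (1 + a)).
  apply: measurableT_comp; first exact: measurable_ln.
  apply: measurable_funD; [exact: measurable_cst|exact: measurable_id].
apply: measurable_funTS.
apply: measurable_funM; last first.
  apply: measurableT_comp; first exact: measurable_expR.
  apply: measurable_funM; [exact: measurable_id|exact: measurable_cst].
apply: measurable_funM; last first.
  apply: measurableT_comp; first exact: measurable_expR.
  apply: measurable_funN; apply: measurable_funM => //; exact: measurable_cst.
apply: measurable_funM; first exact: measurable_cst.
apply: measurableT_comp; first exact: measurable_expR.
exact: measurable_funN.
Qed.

Lemma mH (R : realType) (sigma q : R) :
  measurable_fun (setT : set R) (fun z => omega sigma z * expR (z * q)).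
Proof.
apply: measurable_funM; last first.
  apply: measurableT_comp; first exact: measurable_expR.
  apply: measurable_funM; [exact: measurable_id|exact: measurable_cst].
rewrite /omega; apply: measurable_funM; first exact: measurable_cst.
apply: measurableT_comp; first exact: measurable_expR.
apply: measurable_funM; last exact: measurable_cst.
apply: measurable_funN; apply: measurable_funX; exact: measurable_id.
Qed.

Local Open Scope ereal_scope.

Lemma M1 (R : realType) (mu sigma p q : R) (A Z : nat) (dl eps t : R)
  (f1 : R -> R -> R) (I2 : \bar R) :
  (0 < mu)%R -> (0 < sigma)%R -> (A%:R <= t / eps)%R ->
  (forall a z, (0 <= a <= A%:R)%R -> (`|z| <= Z%:R)%R -> (a * p + z * q - dl <= f1 a z)%R) ->
  0 <= I2 ->
  1 = \int[@lebesgue_measure R]_(a in `[0%R, (t / eps)%R])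
        \int[@lebesgue_measure R]_(z in [set: R])
          (Phi mu a * omega sigma z * expR (f1 a z))%:E + I2 ->
  \int[@lebesgue_measure R]_(a in `[0%R, +oo[)
     trc A (fun a => (Phi mu a * expR (a * p))%:E) a *
  (\int[@lebesgue_measure R]_(z in setT) trc Z (fun z => (omega sigma z * expR (z * q))%:E) z
     * (expR (- dl))%:E) <= 1.
Proof.
move=> mu0 s0 At Hf I20 Hren.
set D : set R := `[0%R, +oo[%classic.
have mD : measurable D by exact: measurable_itv.
have DP a : D a -> (0 <= a)%R by rewrite /D /= in_itv /= andbT.
set Ge := (fun a => (Phi mu a * expR (a * p))%:E).
set He := (fun z => (omega sigma z * expR (z * q))%:E).
have mGe : measurable_fun D Ge.
  by rewrite /Ge; apply/measurable_EFinP; exact: mG.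
have mHe : measurable_fun setT He.
  by rewrite /He; apply/measurable_EFinP; exact: mH.
have Ge0 a : D a -> 0 <= trc A Ge a.
  move=> /DP a0; rewrite /trc; case: ifP => // _; rewrite lee_fin.
  apply: mulr_ge0; [apply: Phi_ge0 => //; exact: ltW|exact: expR_ge0].
have He0 z : 0 <= trc Z He z.
  rewrite /trc; case: ifP => // _; rewrite lee_fin.
  apply: mulr_ge0; [apply: omega_ge0; exact: ltW|exact: expR_ge0].
set e := (expR (- dl))%:E.
have e0 : 0 <= e by rewrite lee_fin expR_ge0.
have -> : \int[@lebesgue_measure R]_(z in setT) trc Z He z * e =
          \int[@lebesgue_measure R]_(z in setT) (trc Z He z * e).
  rewrite (@ge0_integralZr _ (measurableTypeR R) R lebesgue_measure setT measurableT
      (trc Z He)) //; first exact: measurable_trc.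
set C := \int[@lebesgue_measure R]_(z in setT) (trc Z He z * e).
have C0 : 0 <= C by apply: integral_ge0 => z _; apply: mule_ge0.
have -> : \int[@lebesgue_measure R]_(a in D) trc A Ge a * C =
          \int[@lebesgue_measure R]_(a in D) (trc A Ge a * C).
  rewrite (@ge0_integralZr _ (measurableTypeR R) R lebesgue_measure D mD
      (trc A Ge)) //; exact: measurable_trc.
have -> : \int[@lebesgue_measure R]_(a in D) (trc A Ge a * C) =
          \int[@lebesgue_measure R]_(a in D) \int[@lebesgue_measure R]_(z in setT)
              (trc A Ge a * (trc Z He z * e)).
  apply: eq_integral => a /set_mem Da; rewrite /C.
  rewrite (@ge0_integralZl _ (measurableTypeR R) R lebesgue_measure setT measurableT
      (fun z => trc Z He z * e)) //.
  - apply: emeasurable_funM; last exact: measurable_cst.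
    exact: (@measurable_trc R setT He Z measurableT mHe).
  - by move=> z _; apply: mule_ge0.
  - exact: Ge0.
apply: le_trans (_ : _ <= \int[@lebesgue_measure R]_(a in `[0%R, (t / eps)%R])
        \int[@lebesgue_measure R]_(z in [set: R])
          (Phi mu a * omega sigma z * expR (f1 a z))%:E + I2) _; last by rewrite -Hren.
apply: le_trans (leeDl _ I20).
apply: le_int_any.
- move=> a Da; apply: integral_ge0 => z _; apply: mule_ge0; first exact: Ge0.
  exact: mule_ge0.
- move=> a; rewrite /= in_itv /= => /andP[a0 _]; apply: integral_ge0 => z _.
  rewrite lee_fin; apply: mulr_ge0; last exact: expR_ge0.
  apply: mulr_ge0; [apply: Phi_ge0 => //; exact: ltW|apply: omega_ge0; exact: ltW].
move=> a Da; have a0 := DP a Da.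
case: (boolP (a \in tI R A)) => aI; last first.
  by left; apply: integral0_eq => z _; rewrite /trc (negbTE aI) mul0e.
have aA : (a <= A%:R)%R by move: aI; rewrite memtI => /andP[].
right; split.
  by rewrite /= in_itv /= a0 /=; exact: le_trans At.
apply: le_int_any.
- by move=> z _; apply: mule_ge0; [exact: Ge0|exact: mule_ge0].
- move=> z _; rewrite lee_fin; apply: mulr_ge0; last exact: expR_ge0.
  apply: mulr_ge0; [apply: Phi_ge0 => //; exact: ltW|apply: omega_ge0; exact: ltW].
move=> z _.
case: (boolP (z \in tI R Z)) => zI; last first.
  by left; rewrite /trc (negbTE zI) mul0e mule0.
have zZ : (`|z| <= Z%:R)%R by move: zI; rewrite memtI ler_norml.
right; split => //.
rewrite /trc aI zI /Ge /He /e -!EFinM lee_fin.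
have -> : (Phi mu a * expR (a * p) * (omega sigma z * expR (z * q) * expR (- dl)) =
   Phi mu a * omega sigma z * expR (a * p + z * q - dl))%R.
  by rewrite !expRD; ring.
apply: ler_wpM2l.
  apply: mulr_ge0; [apply: Phi_ge0 => //; exact: ltW|apply: omega_ge0; exact: ltW].
rewrite ler_expR; apply: Hf => //; by rewrite a0 aA.
Qed.

Local Close Scope ereal_scope.

Lemma abs_lt_of_sq (R : realType) (u k : R) : 0 < k -> u * u < k * k -> `|u| < k.
Proof.
move=> k0 h; rewrite ltr_norml; apply/andP; split.
- rewrite ltNge; apply/negP => h1; nra.
- rewrite ltNge; apply/negP => h1; nra.
Qed.

Lemma cont2 (R : realType) (F : R -> R -> R) (t0 x0 : R) :
  {for (t0, x0), continuous (fun p : R * R => F p.1 p.2)} ->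
  forall e, 0 < e -> exists2 r, 0 < r & forall s y, `|s - t0| < r -> `|y - x0| < r ->
    `|F s y - F t0 x0| < e.
Proof.
move=> C e e0.
have := (cvgrPdist_lt _ _).1 C e e0.
move=> /(_ _) H.
have [r r0 Hr] := (proj1 (nbhs_ballP _ _)) H.
exists r; first exact: r0.
move=> s y hs hy.
have hb : ball (t0, x0) r (s, y).
  split => /=.
  - rewrite -ball_normE /ball_ /= distrC; exact: hs.
  - rewrite -ball_normE /ball_ /= distrC; exact: hy.
have := Hr _ hb.
rewrite /= distrC; exact.
Qed.

Set Implicit Arguments. Unset Strict Implicit.
Lemma pos_min (R : realType) (a b : R) : 0 < a -> 0 < b -> exists2 r : R, 0 < r & r <= a /\ r <= b.
Proof.
move=> a0 b0; exists (Num.min a b); first by rewrite lt_min a0 b0.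
by split; rewrite ge_min lexx ?orbT.
Qed.

Lemma between_close (R : realType) (u v w c k : R) :
  `|u - c| <= k -> `|v - c| <= k -> Num.min u v <= w <= Num.max u v -> `|w - c| <= k.
Proof.
rewrite !ler_norml => /andP[u1 u2] /andP[v1 v2] /andP[h1 h2].
move: h1 h2; rewrite ge_min le_max => /orP[h1|h1] /orP[h2|h2]; apply/andP; split; lra.
Qed.

Lemma arith_h (R : realType) (k L M2 dl hm h : R) : 0 < L -> 0 < M2 -> 1 <= L -> 0 < h -> h < hm ->
  hm <= k / (2 * L) -> hm <= dl / (4 * M2) ->
  [/\ h * L <= k / 2, h * M2 <= dl / 4 & h <= k / 2].
Proof.
move=> L0 M0 L1 h0 hhm h1 h2.
have a1 : h * (2 * L) <= k by rewrite -ler_pdivlMr; lra.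
have a2 : h * (4 * M2) <= dl by rewrite -ler_pdivlMr; lra.
split; nra.
Qed.

Lemma arith_kL (R : realType) (k L dl : R) : 0 < L -> k <= dl / (8 * L) -> k * L <= dl / 8.
Proof.
move=> L0 h; have : k * (8 * L) <= dl by rewrite -ler_pdivlMr; lra.
lra.
Qed.

Lemma arith_B (R : realType) (s y t0 x0 T r rb rc d : R) :
  `|s - t0| <= r -> `|y - x0| <= r -> 0 < r -> r <= rb / 2 -> rb <= d -> rb <= t0 ->
  r <= rc / 2 -> rc <= T - t0 ->
  [/\ 0 < s, s <= T, `|s - t0| < d, `|y - x0| < d & `|y| <= `|x0| + r].
Proof.
rewrite !ler_norml => /andP[s1 s2] /andP[y1 y2] r0 h1 h2 h3 h4 h5.
have n1 : x0 <= `|x0| by exact: ler_norm.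
have n2 : - x0 <= `|x0| by rewrite -normrN; exact: ler_norm.
split; try lra; rewrite ?ltr_norml ?ler_norml; apply/andP; split; lra.
Qed.

Lemma arith_ub (R : realType) (a b c m0 e s2 y2 : R) :
  `|a - b| < e -> b - c <= m0 -> 0 <= s2 -> 0 <= y2 -> a - (c + s2 + y2) <= m0 + e.
Proof. rewrite ltr_norml => /andP[h1 h2] *; lra. Qed.

Lemma arith_sq (R : realType) (a0 b0 c0 supS hh aT bT cT St Sx e kk : R) :
  `|a0 - b0| < e -> a0 - c0 <= supS -> supS - hh < aT - (cT + St + Sx) ->
  `|aT - bT| < e -> bT - cT <= b0 - c0 -> hh <= kk / 4 -> e = kk / 4 -> St + Sx < kk.
Proof.
rewrite !ltr_norml => /andP[h1 h2] h3 h4 /andP[h5 h6] h7 h8 h9.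
have : 0 < e by lra.
lra.
Qed.

Lemma arith_t (R : realType) (t t0 k r rb A h L : R) :
  `|t - t0| < k -> k <= r / 4 -> r <= rb / 2 -> rb <= t0 -> 0 < h -> 0 <= A ->
  h * L <= k / 2 -> A <= L -> 0 < k -> 0 < t /\ A <= t / h.
Proof.
rewrite ltr_norml => /andP[t1 t2] h1 h2 h3 h0 A0 hL AL k0.
have : A * h <= L * h by apply: ler_wpM2r; lra.
move=> AhL; split; first lra.
rewrite ler_pdivlMr //; lra.
Qed.

Lemma arith_shift (R : realType) (t t0 k h a A L : R) :
  `|t - t0| < k -> 0 <= a <= A -> 0 < h -> h * L <= k / 2 -> A <= L -> `|t - h * a - t0| <= 2 * k.
Proof.
rewrite ltr_norml => /andP[t1 t2] /andP[a0 aA] h0 hL AL.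
have : h * a <= h * L by apply: ler_wpM2l; lra.
have : 0 <= h * a by apply: mulr_ge0; lra.
move=> *; rewrite ler_norml; apply/andP; split; lra.
Qed.

Lemma arith_shiftz (R : realType) (x x0 k h z Z L : R) :
  `|x - x0| < k -> `|z| <= Z -> 0 < h -> h * L <= k / 2 -> Z <= L -> `|x - h * z - x0| <= 2 * k.
Proof.
rewrite ltr_norml => /andP[t1 t2] zZ h0 hL ZL.
have : `|h * z| <= h * L.
  rewrite normrM gtr0_norm //; apply: ler_wpM2l; lra.
rewrite ler_norml => /andP[u1 u2].
rewrite ler_norml; apply/andP; split; lra.
Qed.

Lemma arith_w (R : realType) (w t0 k r rb rc ra r1 : R) :
  `|w - t0| <= 2 * k -> 0 < k -> k <= r / 4 -> r <= rb / 2 -> rb <= t0 -> r <= rc / 2 ->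
  rc <= ra -> ra <= r1 -> [/\ 0 < w, `|w - t0| < r1 & 2 * k <= r].
Proof.
rewrite ler_norml => /andP[w1 w2] k0 h1 h2 h3 h4 h5 h6.
split; try lra; rewrite ltr_norml; apply/andP; split; lra.
Qed.

Lemma arith_hh (R : realType) (h k : R) : 0 < h -> h <= k / 2 -> h * h <= k * k / 4.
Proof. move=> h0 hk; nra. Qed.

Lemma arith_sum_lt (R : realType) (St Sx kk : R) : St + Sx < kk -> 0 <= Sx -> St < kk.
Proof. move=> *; lra. Qed.

Set Implicit Arguments. Unset Strict Implicit.
Lemma arith_final (R : realType) (psiT psiS PsiT PsiSx PsiS p q a z h k eta dl A Z L M2 t t0 x x0 supS : R) :
  psiS - (PsiS + (t - h * a - t0) * (t - h * a - t0) + (x - h * z - x0) * (x - h * z - x0)) <= supS ->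
  supS - h * h < psiT - (PsiT + (t - t0) * (t - t0) + (x - x0) * (x - x0)) ->
  p * (h * a) - eta * (h * a) <= PsiT - PsiSx ->
  q * (h * z) - eta * (h * `|z|) <= PsiSx - PsiS ->
  0 <= a <= A -> `|z| <= Z -> 0 < h -> `|t - t0| < k -> `|x - x0| < k ->
  eta * L = dl / 4 -> k * L <= dl / 8 -> h * M2 <= dl / 4 ->
  L = A + Z + 1 -> M2 = A * A + Z * Z + 1 -> 0 < eta -> 0 < k -> 0 < dl ->
  (a * p + z * q - dl) * h <= psiT - psiS.
Proof.
move=> G1 hv E1 E2 /andP[a0 aA] zZ h0 tk xk etaL kL hM LE ME eta0 k0 dl0.
have [u uE] : exists u, u = h * a by exists (h * a).
have [w wE] : exists w, w = h * `|z| by exists (h * `|z|).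
rewrite -uE in G1 E1; rewrite -wE in E2.
have u0 : 0 <= u by rewrite uE; nra.
have w0 : 0 <= w by rewrite wE; apply: mulr_ge0; [lra|exact: normr_ge0].
have uA : u <= h * A by rewrite uE; nra.
have wZ : w <= h * Z by rewrite wE; nra.
have hzw : - w <= h * z <= w.
  have : `|h * z| = w by rewrite wE normrM gtr0_norm.
  by move=> <-; rewrite -ler_norml.
move: hzw => /andP[hz1 hz2].
move: tk xk; rewrite !ltr_norml => /andP[tk1 tk2] /andP[xk1 xk2].
have P1 : (t - u - t0) * (t - u - t0) - (t - t0) * (t - t0) <= u * u + 2 * u * k by nra.
have P2 : (x - h * z - x0) * (x - h * z - x0) - (x - x0) * (x - x0) <= w * w + 2 * w * k.
  have -> : (x - h * z - x0) * (x - h * z - x0) - (x - x0) * (x - x0) =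
            (h * z) * (h * z) - 2 * (h * z) * (x - x0) by ring.
  have : (h * z) * (h * z) <= w * w by nra.
  nra.
have uw : u + w <= h * L by rewrite LE; nra.
have P4 : eta * (u + w) <= h * (dl / 4).
  rewrite -etaL; nra.
have P5 : 2 * k * (u + w) <= h * (dl / 4).
  have : 2 * k * (u + w) <= 2 * k * (h * L) by nra.
  nra.
have P6 : u * u + w * w + h * h <= h * (dl / 4).
  have : u * u <= (h * A) * (h * A) by nra.
  have : w * w <= (h * Z) * (h * Z) by nra.
  have : h * (h * M2) <= h * (dl / 4) by nra.
  rewrite ME; nra.
have -> : (a * p + z * q - dl) * h = p * u + q * (h * z) - dl * h by rewrite uE; ring.
have : 0 < h * dl by nra.
lra.
Qed.

Unset Implicit Arguments. Set Strict Implicit.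

Lemma sq_ge0 {R : realType} (u : R) : 0 <= u * u.
Proof. by rewrite -expr2 sqr_ge0. Qed.

Lemma CORE (R : realType) (T : R) (psi : R -> R -> R -> R) (epsn : nat -> R)
  (psi0 Psi : R -> R -> R) (t0 x0 : R) :
  (forall n, 0 < epsn n) -> epsn @ \oo --> 0 ->
  (forall X e : R, 0 < e -> exists N : nat, forall n t x, (N <= n)%N ->
     0 <= t <= T -> `|x| <= X -> `|psi (epsn n) t x - psi0 t x| < e) ->
  C2_pos Psi -> 0 < t0 < T ->
  (exists2 d : R, 0 < d & forall t x, `|t - t0| < d -> `|x - x0| < d ->
       psi0 t x - Psi t x <= psi0 t0 x0 - Psi t0 x0) ->
  forall A Z dl : R, 0 <= A -> 0 <= Z -> 0 < dl ->
  exists eps t x : R, [/\ 0 < eps, 0 < t, A <= t / eps &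
    forall a z, 0 <= a <= A -> `|z| <= Z ->
      a * dt Psi t0 x0 + z * dx Psi t0 x0 - dl <=
        (psi eps t x - psi eps (t - eps * a) (x - eps * z)) / eps].
Proof.
move=> epos econv unif C2 /andP[t0p t0T] [d d0 locmax] A Z dl A0 Z0 dl0.
set p := dt Psi t0 x0; set q := dx Psi t0 x0.
have [_ _ _ Cont] := C2 t0 x0 t0p.
have ct : {for (t0, x0), continuous (fun p : R * R => dt Psi p.1 p.2)}.
  by apply: Cont; rewrite !inE eqxx !orbT.
have cx : {for (t0, x0), continuous (fun p : R * R => dx Psi p.1 p.2)}.
  by apply: Cont; rewrite !inE eqxx !orbT.
set L := A + Z + 1.
have L0 : 0 < L by rewrite /L; lra.
set eta := dl / (4 * L).
have eta0 : 0 < eta by rewrite /eta divr_gt0 //; lra.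
have [r1 r10 H1] := @cont2 R _ _ _ ct _ eta0.
have [r2 r20 H2] := @cont2 R _ _ _ cx _ eta0.
have [ra ra0 [ra1 ra2]] := @pos_min R _ _ r10 r20.
have [rb rb0 [rb1 rb2]] : exists2 rb : R, 0 < rb & rb <= d /\ rb <= t0.
  exact: pos_min.
have [rc rc0 [rc1 rc2]] : exists2 rc : R, 0 < rc & rc <= ra /\ rc <= T - t0.
  by apply: pos_min => //; lra.
have [r r0 [rr1 rr2]] : exists2 r : R, 0 < r & r <= rb / 2 /\ r <= rc / 2.
  by apply: pos_min; lra.
have [k k0 [kr kdl]] : exists2 k : R, 0 < k & k <= r / 4 /\ k <= dl / (8 * L).
  by apply: pos_min => //; apply: divr_gt0 => //; lra.
have L1 : 1 <= L by rewrite /L; lra.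
have AL : A <= L by rewrite /L; lra.
have ZL : Z <= L by rewrite /L; lra.
have k2r : 2 * k <= r by lra.
have kk2 : k <= 2 * k by lra.
have kr1 : k < r1 by lra.
have kr2 : k < r2 by lra.
have k2r2 : 2 * k < r2 by lra.
set M2 := A * A + Z * Z + 1.
have M20 : 0 < M2 by rewrite /M2; nra.
have [hm hm0 [hmk hm2]] : exists2 hm : R, 0 < hm & hm <= k / (2 * L) /\ hm <= dl / (4 * M2).
  by apply: pos_min; apply: divr_gt0 => //; lra.
set e := k * k / 4.
have e0 : 0 < e by rewrite /e; nra.
set X := `|x0| + r.
have [N1 HN1] := unif X e e0.
have [N2 _ HN2] : \forall n \near \oo, `|0 - epsn n| < hm.
  by move/cvgrPdist_lt : econv => /(_ hm hm0).
set n := maxn N1 N2.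
set h := epsn n.
have h0 : 0 < h := epos n.
have hhm : h < hm.
  by have := HN2 n (leq_maxr N1 N2); rewrite sub0r normrN gtr0_norm.
have [hL hM hk] := arith_h L0 M20 L1 h0 hhm hmk hm2.
have kL := arith_kL L0 kdl.
have etaL : eta * L = dl / 4.
  rewrite /eta; field; apply/eqP; lra.
pose Bp (s y : R) := `|s - t0| <= r /\ `|y - x0| <= r.
set m0 := psi0 t0 x0 - Psi t0 x0.
have Bdom s y : Bp s y -> [/\ 0 < s, s <= T, `|s - t0| < d, `|y - x0| < d & `|y| <= X].
  by move=> [B1 B2]; exact: arith_B B1 B2 r0 rr1 rb1 rb2 rr2 rc2.
have close s y : Bp s y -> `|psi h s y - psi0 s y| < e.
  move=> /Bdom [s0 sT _ _ yX]; apply: HN1 => //; first exact: leq_maxl.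
  by rewrite (ltW s0) sT.
have ub s y : Bp s y ->
    psi h s y - (Psi s y + (s - t0) * (s - t0) + (y - x0) * (y - x0)) <= m0 + e.
  move=> B; have [_ _ sd yd _] := Bdom s y B.
  exact: arith_ub (close s y B) (locmax s y sd yd) (sq_ge0 _) (sq_ge0 _).
pose S := [set v | exists s y, Bp s y /\ v = psi h s y - (Psi s y + (s - t0) * (s - t0) + (y - x0) * (y - x0))].
have B00 : Bp t0 x0 by rewrite /Bp !subrr normr0; split; exact: ltW.
have hsup : has_sup S.
  split.
    exists (psi h t0 x0 - (Psi t0 x0 + (t0 - t0) * (t0 - t0) + (x0 - x0) * (x0 - x0))).
    by exists t0, x0.
  by exists (m0 + e) => _ [s [y [B ->]]]; exact: ub.
have hh0 : 0 < h * h by exact: mulr_gt0.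
have [_ [t [x [Btx ->]]] hv] := sup_adherent hh0 hsup.
have upb s y : Bp s y ->
   psi h s y - (Psi s y + (s - t0) * (s - t0) + (y - x0) * (y - x0)) <= sup S.
  by move=> B; apply: sup_upper_bound => //; exists s, y.
have v0 := upb t0 x0 B00.
rewrite !subrr !mulr0 !addr0 in v0.
have c0 := close t0 x0 B00.
have c1 := close t x Btx.
have [tpos _ td xd _] := Bdom t x Btx.
have lm := locmax t x td xd.
have hhk := arith_hh h0 hk.
have sqsum := arith_sq c0 v0 hv c1 lm hhk erefl.
have tk : `|t - t0| < k.
  apply: abs_lt_of_sq => //; exact: arith_sum_lt sqsum (sq_ge0 _).
have xk : `|x - x0| < k.
  apply: abs_lt_of_sq => //; rewrite addrC in sqsum; exact: arith_sum_lt sqsum (sq_ge0 _).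
have [tpos' Ah] := arith_t tk kr rr1 rb2 h0 A0 hL AL k0.
have tk2 : `|t - t0| <= 2 * k := le_trans (ltW tk) kk2.
have xk2 : `|x - x0| <= 2 * k := le_trans (ltW xk) kk2.
have xr1 : `|x - x0| < r1 := lt_trans xk kr1.
exists h, t, x; split => //.
move=> a z aA zZ.
rewrite ler_pdivlMr //.
have st := arith_shift tk aA h0 hL AL.
have sy := arith_shiftz xk zZ h0 hL ZL.
have Bs : Bp (t - h * a) (x - h * z) by split; apply: le_trans k2r.
have G1 := upb _ _ Bs.
have ha0 : 0 <= h * a by apply: mulr_ge0; [exact: ltW|case/andP: aA].
have [spos sr1 _] := arith_w st k0 kr rr1 rb2 rr2 rc1 ra1.
have [_ sr2 _] := arith_w st k0 kr rr1 rb2 rr2 rc1 ra2.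
have E1 : p * (h * a) - eta * (h * a) <= Psi t x - Psi (t - h * a) x.
  have := @mvt_lb R (fun s => Psi s x) (t - h * a) t p eta.
  have -> : t - (t - h * a) = h * a by ring.
  rewrite ger0_norm //; apply => w hw.
  have wt := between_close st tk2 hw.
  have [wpos wr1 _] := arith_w wt k0 kr rr1 rb2 rr2 rc1 ra1.
  split; first by have [D1 _ _ _] := C2 w x wpos.
  by apply: ltW; exact: H1.
have E2 : q * (h * z) - eta * (h * `|z|) <= Psi (t - h * a) x - Psi (t - h * a) (x - h * z).
  have := @mvt_lb R (fun y => Psi (t - h * a) y) (x - h * z) x q eta.
  have -> : x - (x - h * z) = h * z by ring.
  rewrite normrM (gtr0_norm h0); apply => w hw.
  have wx := between_close sy xk2 hw.
  have wr2 := le_lt_trans wx k2r2.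
  split; first by have [_ D2 _ _] := C2 (t - h * a) w spos.
  by apply: ltW; exact: H2.
exact: (arith_final G1 hv E1 E2 aA zZ h0 tk xk etaL kL hM erefl erefl eta0 k0 dl0).
Qed.

Theorem proposition6 (R : realType) (mu sigma T : R)
  (v : R -> R) (eta : R -> R -> R)
  (psi : R -> R -> R -> R) (* psi eps t x = psi_eps(t,x) *)
  (epsn : nat -> R) (psi0 : R -> R -> R) :
  0 < mu < 1 -> 0 < sigma -> 0 < T ->
  (* (H1) *)
  (exists M : R, forall x, `|v x| <= M) ->
  (* (H2) *)
  (@lebesgue_measure R).-integrable `[0%R, 1%R[
     (fun a => expeR (- ereal_inf [set (eta x a)%:E | x in [set: R]]))%E ->
  (* (H3) *)
  (exists C : R, forall eps x : R, 0 < eps ->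
     ((expR (- C / eps))%:E <
      \int[@lebesgue_measure R]_(a in `[0%R, 1%R[)
        \int[@lebesgue_measure R]_(z in [set: R])
          (Phi mu a * omega sigma z * expR (Bint mu a)
             * expR (- eta (x - eps * z) a))%:E)%E) ->
  (* (H4) *)
  (exists L : R, forall eps a x y, 0 < eps < 1 -> 0 <= a < 1 ->
     `|phi0 v eta eps x a - phi0 v eta eps y a| <= L * `|x - y|) ->
  (* (H5) *)
  (exists Cxx : R, forall eps a, 0 < eps -> 0 <= a < 1 ->
     dist_d2_le (fun x => phi0 v eta eps x a) Cxx) ->
  (* psi_eps(0,x) = phi^0_eps(x,0) *)
  (forall eps x, 0 < eps -> psi eps 0 x = phi0 v eta eps x 0) ->
  (* the renewal equation satisfied by psi_eps, t > 0 *)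
  (forall eps t x : R, 0 < eps -> 0 < t ->
     (1%:E =
      \int[@lebesgue_measure R]_(a in `[0%R, (t / eps)%R])
        \int[@lebesgue_measure R]_(z in [set: R])
          (Phi mu a * omega sigma z
             * expR ((psi eps t x - psi eps (t - eps * a) (x - eps * z)) / eps))%:E
      + \int[@lebesgue_measure R]_(a in `[0%R, 1%R[)
        \int[@lebesgue_measure R]_(z in [set: R])
          (Phi mu (a + t / eps) * omega sigma z
             * expR ((psi eps t x - phi0 v eta eps (x - eps * z) a) / eps
                     + Bint mu a))%:E)%E) ->
  (* subsequence eps_n -> 0 *)
  (forall n, 0 < epsn n) -> epsn @ \oo --> 0 ->
  (* psi_{eps_n} -> psi0 locally uniformly on [0,T] x R *)
  (forall X e : R, 0 < e -> exists N : nat, forall n t x, (N <= n)%N ->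
     0 <= t <= T -> `|x| <= X -> `|psi (epsn n) t x - psi0 t x| < e) ->
  (* viscosity subsolution property *)
  forall (Psi : R -> R -> R) (t0 x0 : R),
    C2_pos Psi -> 0 < t0 < T ->
    (exists2 d : R, 0 < d & forall t x, `|t - t0| < d -> `|x - x0| < d ->
       psi0 t x - Psi t x <= psi0 t0 x0 - Psi t0 x0) ->
    (\int[@lebesgue_measure R]_(a in `[0%R, +oo[)
       \int[@lebesgue_measure R]_(z in [set: R])
         (Phi mu a * omega sigma z
            * expR (a * dt Psi t0 x0 + z * dx Psi t0 x0))%:E <= 1)%E.
Proof.
move=> hmu hs hT H1 H2 H3 H4 H5 Hinit Hren epos econv unif Psi t0 x0 C2 ht0 locmax.
have mu0 : 0 < mu by case/andP: hmu.
set p := dt Psi t0 x0; set q := dx Psi t0 x0.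
have -> : (\int[@lebesgue_measure R]_(a in `[0%R, +oo[)
       \int[@lebesgue_measure R]_(z in [set: R])
         (Phi mu a * omega sigma z * expR (a * p + z * q))%:E =
      \int[@lebesgue_measure R]_(a in `[0%R, +oo[)
       \int[@lebesgue_measure R]_(z in [set: R])
         ((Phi mu a * expR (a * p))%:E * (omega sigma z * expR (z * q))%:E))%E.
  apply: eq_integral => a _; apply: eq_integral => z _.
  by rewrite -EFinM expRD; congr EFin; ring.
apply: (@M3 R (fun a => Phi mu a * expR (a * p)) (fun z => omega sigma z * expR (z * q))).
- move=> a a0; apply: mulr_ge0; [apply: Phi_ge0 => //; exact: ltW|exact: expR_ge0].
- move=> z; apply: mulr_ge0; [apply: omega_ge0; exact: ltW|exact: expR_ge0].
- exact: mG.
- exact: mH.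
move=> A Z dl dl0.
have [eps [t [x [eps0 tpos Ale Hf]]]] := @CORE R T psi epsn psi0 Psi t0 x0 epos econv unif C2 ht0 locmax
   (A%:R) (Z%:R) dl (ler0n _ _) (ler0n _ _) dl0.
apply: (@M1 R mu sigma p q A Z dl eps t
   (fun a z => (psi eps t x - psi eps (t - eps * a) (x - eps * z)) / eps) _ mu0 hs Ale Hf); last first.
  exact: Hren.
apply: integral_ge0 => a; rewrite /= in_itv /= => /andP[a0 _].
apply: integral_ge0 => z _; rewrite lee_fin.
apply: mulr_ge0; last exact: expR_ge0.
apply: mulr_ge0; last by apply: omega_ge0; exact: ltW.
apply: Phi_ge0; first exact: ltW.
apply: addr_ge0 => //; apply: divr_ge0; exact: ltW.
Qed.
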